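(* Consider a balanced mass action chemical reaction network with complex stoichiometric matrix $Z$ and complex-graph incidence matrix $B$, and let $x^*\in\mathbb{R}^m_+$ be a thermodynamic equilibrium. Assume the complex graph is connected. Then for any other thermodynamic equilibrium $x^{**}$ there exists a constant $d^{**}>0$ such that $\mathcal{K}(x^{**})=d^{**}\mathcal{K}(x^* )$ and $\mathrm{Exp}\big(Z^T\mathrm{Ln}(\tfrac{x}{x^{**}})\big)=\tfrac{1}{d^{**}}\mathrm{Exp}\big(Z^T\mathrm{Ln}(\tfrac{x}{x^{*}})\big)$ for all $x\in\mathbb{R}^m_+$. Furthermore, if the complex graph is not connected and has $\ell$ connected components (linkage classes), then for any other thermodynamic equilibrium $x^{**}$ there exist constants $d_p^{**}>0$, $p=1,\dots,\ell$, such that $\mathcal{K}_p(x^{**})=d_p^{**}\mathcal{K}_p(x^* )$ for $p=1,\dots,\ell$.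
   Context: Network: $m$ species with concentrations $x\in\mathbb{R}^m_+$, $c$ complexes, $r$ reactions. $Z$ ($m\times c$) has as $\rho$-th column the species composition of complex $\rho$. The complex graph has the complexes as vertices and, for each reaction $j$, an edge from its substrate complex $\mathcal{S}_j$ to its product complex $\mathcal{P}_j$; $B$ is its $c\times r$ incidence matrix ($-1$ at tail, $+1$ at head). Connectivity is in the undirected sense; the connected components are called linkage classes. Mass action rates: $v_j(x)=k_j^{\mathrm{forw}}\exp(Z_{\mathcal{S}_j}^T\mathrm{Ln}(x))-k_j^{\mathrm{rev}}\exp(Z_{\mathcal{P}_j}^T\mathrm{Ln}(x))$ with $k_j^{\mathrm{forw}},k_j^{\mathrm{rev}}\ge0$ not both zero, and dynamics $\dot x=ZBv(x)$. A thermodynamic equilibrium is $x^*\in\mathbb{R}^m_+$ with $v(x^* )=0$; the network is balanced if one exists. For a thermodynamic equilibrium $x^*$, the balanced reaction constants are $\kappa_j(x^* ):=k_j^{\mathrm{forw}}\exp(Z_{\mathcal{S}_j}^T\mathrm{Ln}(x^* ))=k_j^{\mathrm{rev}}\exp(Z_{\mathcal{P}_j}^T\mathrm{Ln}(x^* ))>0$ and $\mathcal{K}(x^* ):=\mathrm{diag}(\kappa_1(x^* ),\dots,\kappa_r(x^* ))$. When reactions are grouped by linkage class, $\mathcal{K}_p(x^* )$ denotes the diagonal block of $\mathcal{K}(x^* )$ belonging to the reactions of the $p$-th linkage class. $\mathrm{Ln},\mathrm{Exp}$ are componentwise logarithm/exponential and $x/x^*$ is the componentwise quotient. *)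

(* Defs.v *)
From HB Require Import structures.
From mathcomp Require Import all_boot all_order all_algebra.
From mathcomp Require Import all_classical all_reals all_analysis.
Set Implicit Arguments. Unset Strict Implicit. Unset Printing Implicit Defensive.
Import Order.TTheory GRing.Theory Num.Theory.
Local Open Scope ring_scope.

Section CRN.
Variable R : realType.

Definition Zmx (m c : nat) (Z : 'M[nat]_(m, c)) : 'M[R]_(m, c) :=
  map_mx (fun n : nat => n%:R) Z.

Definition Ln (n : nat) (x : 'cV[R]_n) : 'cV[R]_n := map_mx (@ln R) x.
Definition Exp (n : nat) (x : 'cV[R]_n) : 'cV[R]_n := map_mx (@expR R) x.
Definition vdiv (n : nat) (x y : 'cV[R]_n) : 'cV[R]_n := \col_i (x i 0 / y i 0).

Definition posv (n : nat) (x : 'cV[R]_n) : Prop := forall i, 0 < x i 0.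

Definition ZtLn (m c : nat) (Z : 'M[nat]_(m, c)) (x : 'cV[R]_m) : 'cV[R]_c :=
  (Zmx Z)^T *m Ln x.

(* mass action rate of reaction j; S j / P j are substrate / product complexes *)
Definition rate (m c r : nat) (Z : 'M[nat]_(m, c)) (S P : 'I_r -> 'I_c)
  (kf kr : 'I_r -> R) (j : 'I_r) (x : 'cV[R]_m) : R :=
  kf j * expR (ZtLn Z x (S j) 0) - kr j * expR (ZtLn Z x (P j) 0).

Definition thermo_eq (m c r : nat) (Z : 'M[nat]_(m, c)) (S P : 'I_r -> 'I_c)
  (kf kr : 'I_r -> R) (x : 'cV[R]_m) : Prop :=
  posv x /\ forall j, rate Z S P kf kr j x = 0.

Definition kappa (m c r : nat) (Z : 'M[nat]_(m, c)) (S : 'I_r -> 'I_c)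
  (kf : 'I_r -> R) (x : 'cV[R]_m) (j : 'I_r) : R :=
  kf j * expR (ZtLn Z x (S j) 0).

Definition Kmx (m c r : nat) (Z : 'M[nat]_(m, c)) (S : 'I_r -> 'I_c)
  (kf : 'I_r -> R) (x : 'cV[R]_m) : 'M[R]_r :=
  diag_mx (\row_j kappa Z S kf x j).

End CRN.

Definition cgraph (c r : nat) (S P : 'I_r -> 'I_c) : rel 'I_c :=
  fun a b => [exists j, ((S j == a) && (P j == b)) || ((S j == b) && (P j == a))].

Definition cg_connected (c r : nat) (S P : 'I_r -> 'I_c) : Prop :=
  forall a b : 'I_c, connect (cgraph S P) a b.

Definition same_linkage (c r : nat) (S P : 'I_r -> 'I_c) (a b : 'I_c) : Prop :=
  connect (cgraph S P) a b.

(* Main.v *)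
Require Import Defs.
From HB Require Import structures.
From mathcomp Require Import all_boot all_order all_algebra.
From mathcomp Require Import all_classical all_reals all_analysis.
Import Order.TTheory GRing.Theory Num.Theory.
Local Open Scope ring_scope.

Lemma ZtLn_div (R : realType) (m c : nat) (Z : 'M[nat]_(m, c)) (x y : 'cV[R]_m) :
  posv x -> posv y -> forall a,
  ZtLn Z (vdiv x y) a 0 = ZtLn Z x a 0 - ZtLn Z y a 0.
Proof.
move=> hx hy a; rewrite /ZtLn !mxE -sumrB; apply: eq_bigr => i _.
rewrite /Ln !mxE lnM ?posrE ?invr_gt0 // lnV ?posrE //.
by rewrite mulrDr mulrN.
Qed.

Lemma eq_rate {R : realType} {m c r : nat} {Z : 'M[nat]_(m, c)}
  {S P : 'I_r -> 'I_c} {kf kr : 'I_r -> R} {x} j :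
  thermo_eq Z S P kf kr x ->
  kf j * expR (ZtLn Z x (S j) 0) = kr j * expR (ZtLn Z x (P j) 0).
Proof. by case=> _ /(_ j); rewrite /rate => /eqP; rewrite subr_eq0 => /eqP. Qed.

Theorem proposition3 (R : realType) (m c r : nat) (Z : 'M[nat]_(m, c))
  (S P : 'I_r -> 'I_c) (kf kr : 'I_r -> R)
  (hSP : forall j, S j != P j)
  (hkf : forall j, 0 <= kf j) (hkr : forall j, 0 <= kr j)
  (hk : forall j, kf j != 0 \/ kr j != 0)
  (xs : 'cV[R]_m) (hxs : thermo_eq Z S P kf kr xs) :
  (cg_connected S P ->
    forall xss : 'cV[R]_m, thermo_eq Z S P kf kr xss ->
      exists d : R, 0 < d /\
        Kmx Z S kf xss = d *: Kmx Z S kf xs /\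
        (forall x : 'cV[R]_m, posv x ->
           Exp (ZtLn Z (vdiv x xss)) = d^-1 *: Exp (ZtLn Z (vdiv x xs)))) /\
  (~ cg_connected S P ->
    forall xss : 'cV[R]_m, thermo_eq Z S P kf kr xss ->
      exists d : 'I_r -> R,
        (forall j, 0 < d j) /\
        (forall j j', same_linkage S P (S j) (S j') -> d j = d j') /\
        (forall j, kappa Z S kf xss j = d j * kappa Z S kf xs j)).
Proof.
have kf0 : forall j, kf j != 0.
  move=> j; case: (hk j) => // hr; apply/negP => /eqP h0.
  move: (eq_rate j hxs); rewrite h0 mul0r => /esym/eqP.
  by rewrite mulf_eq0 (negbTE hr) gt_eqF ?expR_gt0.
have kr0 : forall j, kr j != 0.
  move=> j; apply/negP => /eqP h0.
  move: (eq_rate j hxs); rewrite h0 mul0r => /eqP.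
  by rewrite mulf_eq0 (negbTE (kf0 j)) gt_eqF ?expR_gt0.
pose DD := fun (xss : 'cV[R]_m) a => expR (ZtLn Z xss a 0 - ZtLn Z xs a 0).
suff key : forall xss, thermo_eq Z S P kf kr xss ->
  (forall a b, connect (cgraph S P) a b -> DD xss a = DD xss b) /\
  (forall j, kappa Z S kf xss j = DD xss (S j) * kappa Z S kf xs j).
  split.
    move=> hcon xss hxss; have [Dc Dk] := key xss hxss.
    pose D := DD xss.
    have [d [d0 hd]] : exists d, 0 < d /\ forall a, D a = d.
      case: (pickP (fun _ : 'I_c => true)) => [a0 _|none].
        by exists (D a0); split; [exact: expR_gt0| move=> a; apply: Dc].
      by exists 1; split => // a; move: (none a).
    exists d; split => //; split.
      apply/matrixP => i j; rewrite !mxE; case: (i == j) => /=.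
        rewrite Dk -(hd (S i)) /D /=; by [].
      by rewrite mulr0.
    move=> x hx; apply/matrixP => a b; rewrite (ord1 b) /Exp mxE [in RHS]mxE [in X in _ * X]mxE.
    case: hxss => hpss _; case: hxs => hps _.
    rewrite (@ZtLn_div _ _ _ Z _ _ hx hpss) (@ZtLn_div _ _ _ Z _ _ hx hps) // -(hd a) /D -expRN -expRD; congr expR.
    by rewrite [RHS]addrC opprB addrA subrK.
  move=> _ xss hxss; have [Dc Dk] := key xss hxss.
  exists (fun j => expR (ZtLn Z xss (S j) 0 - ZtLn Z xs (S j) 0)); split.
    by move=> j; apply: expR_gt0.
  by split => // j j' hl; apply: Dc.
move=> xss hxss; pose D := DD xss; rewrite -/D; split.
  have edge : forall j, D (S j) = D (P j).
    move=> j; rewrite /D /DD !expRB.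
    have e1 := eq_rate j hxs; have e2 := eq_rate j hxss.
    have h1 : expR (ZtLn Z xs (S j) 0) = kr j / kf j * expR (ZtLn Z xs (P j) 0).
      by rewrite -mulrA mulrCA -e1 mulrA mulVf ?mul1r // kf0.
    have h2 : expR (ZtLn Z xss (S j) 0) = kr j / kf j * expR (ZtLn Z xss (P j) 0).
      by rewrite -mulrA mulrCA -e2 mulrA mulVf ?mul1r // kf0.
    rewrite h1 h2 invfM mulrACA mulfV ?mul1r //.
    by rewrite mulf_neq0 ?invr_eq0 ?kf0 ?kr0.
  move=> a b hab.
  have hc : fingraph.closed (cgraph S P) [pred z | D z == D a].
    move=> u v /existsP [j /orP [/andP [/eqP <- /eqP <-]|/andP [/eqP <- /eqP <-]]].
      by change ((D (S j) == D a) = (D (P j) == D a)); rewrite edge. by change ((D (P j) == D a) = (D (S j) == D a)); rewrite edge.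
  have := closed_connect hc hab; change (((D a == D a) = (D b == D a)) -> D a = D b).
  by rewrite eqxx => /esym /eqP.
move=> j; rewrite /kappa /D mulrCA -expRD subrK.
by [].
Qed.
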